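(* Every spider graph is odd prime.
   Context: All graphs are finite and simple. A graph $G$ of order $N$ is odd prime if there is a bijection $\ell:V(G)\to\{1,3,\ldots,2N-1\}$ with $\gcd(\ell(u),\ell(v))=1$ for every edge $uv$. A spider is a tree obtained from disjoint paths $P_{n_1},\ldots,P_{n_k}$ and a new central vertex $v$ by joining one end vertex of each path to $v$ (equivalently, a tree with at most one vertex of degree at least $3$). *)

(* Defs.v *)
From mathcomp Require Import all_boot.
Set Implicit Arguments. Unset Strict Implicit. Unset Printing Implicit Defensive.

Definition simple_graph (T : finType) (e : rel T) : Prop :=
  symmetric e /\ irreflexive e.

Definition degree (T : finType) (e : rel T) (x : T) : nat := #|[set y | e x y]|.

Definition connected_graph (T : finType) (e : rel T) : Prop :=
  forall x y : T, connect e x y.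

Definition acyclic_graph (T : finType) (e : rel T) : Prop :=
  forall c : seq T, 3 <= size c -> ~~ ucycleb e c.

Definition is_tree (T : finType) (e : rel T) : Prop :=
  connected_graph e /\ acyclic_graph e.

Definition spider (T : finType) (e : rel T) : Prop :=
  is_tree e /\ #|[set x | 3 <= degree e x]| <= 1.

(* odd prime labeling: a bijection l : V -> {1,3,...,2N-1}, encoded as
   l v = 2 * f v + 1 with f : V -> 'I_N bijective, N = #|V|, such that
   adjacent vertices get coprime labels. *)
Definition odd_prime (T : finType) (e : rel T) : Prop :=
  exists f : T -> 'I_#|T|, bijective f /\
    forall u v : T, e u v -> coprime (2 * f u + 1) (2 * f v + 1).

(* Main.v *)
Require Import Defs.
From mathcomp Require Import all_boot zify.

Lemma coprime_odd_succ k : coprime (2 * k + 1) (2 * k.+1 + 1).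
Proof.
have -> : 2 * k.+1 + 1 = (2 * k + 1) + 2 by lia.
rewrite /coprime gcdnDl gcdnC -/(coprime 2 _) coprime2n addn1 /= mul2n odd_double.
done.
Qed.

Lemma index_rev (T : eqType) (s : seq T) x : uniq s -> x \in s ->
  index x (rev s) = size s - (index x s).+1.
Proof.
move=> us xs.
have lt : index x s < size s by rewrite index_mem.
have k_lt : size s - (index x s).+1 < size (rev s) by rewrite size_rev; lia.
have : nth x (rev s) (size s - (index x s).+1) = x.
  rewrite nth_rev; last by lia.
  have -> : size s - (size s - (index x s).+1).+1 = index x s by lia.
  by rewrite nth_index.
move=> {1}<-; by rewrite index_uniq // rev_uniq.
Qed.

Lemma last_take (T : Type) (x : T) (q : seq T) i : i < size q ->
  last x (take i.+1 q) = nth x q i.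
Proof.
elim: q x i => [|z q IH] x i //= lt.
case: i lt => [|i] lt /=; first by case: q {IH lt}.
by rewrite IH // (set_nth_default x).
Qed.

Lemma card_le1_eq (T : finType) (A : {set T}) x y :
  #|A| <= 1 -> x \in A -> y \in A -> x = y.
Proof. by move=> /card_le1_eqP H xA yA; apply: H. Qed.
Arguments card_le1_eq {T A x y}.

Section Forest.
Variables (T : finType) (e : rel T).
Hypotheses (esym : symmetric e) (eirr : irreflexive e) (eacyc : acyclic_graph e).

Lemma leaf_exists (S : {set T}) : S != set0 ->
  exists2 a, a \in S & #|[set y in S | e a y]| <= 1.
Proof.
move=> SN.
case: (boolP [exists a in S, #|[set y in S | e a y]| <= 1]) =>
  [/existsP [a /andP [aS le]] | hn]; first by exists a.
have H : forall a, a \in S -> 1 < #|[set y in S | e a y]|.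
  move=> a aS; rewrite ltnNge; apply: contra hn => le; apply/existsP; exists a.
  by rewrite aS le.
case/set0Pn: SN => x0 x0S.
have P : forall n, exists x q, [/\ x \in S, all (mem S) q, path e x q,
    uniq (x :: q) & size q = n].
  elim=> [|n [x [q [xS qS pq uq sq]]]]; first by exists x0, [::].
  have : ~~ ([set y in S | e x y] \subset [set head x q]).
    apply/negP => sub; have := subset_leq_card sub.
    by rewrite cards1 leqNgt H.
  case/subsetPn => y; rewrite !inE => /andP [yS exy] yh.
  have yx : y != x by apply: contraTneq exy => ->; rewrite eirr.
  case: (boolP (y \in q)) => yq; last first.
    exists y, (x :: q); split => //=.
    - by rewrite xS.
    - by rewrite esym exy.
    - by rewrite inE negb_or yx yq.
    - by rewrite sq.
  exfalso.
  case: q qS pq uq sq yh yq => [|z q'] qS pq uq sq yh yq //.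
  set q := z :: q' in qS pq uq sq yq *.
  set i := index y q.
  have ilt : i < size q by rewrite index_mem.
  have i1 : 0 < i by rewrite /i /q /= eq_sym (negbTE yh).
    have lt : last x (take i.+1 q) = y by rewrite last_take // nth_index.
  clearbody q i.
  have sz : 3 <= size (x :: take i.+1 q).
    rewrite [size _]/= size_take; case: ifP => _; lia.
  move/negP: (eacyc _ sz); apply.
  move: pq uq; rewrite -{1 2}(cat_take_drop i.+1 q).
  move: (take i.+1 q) lt (drop i.+1 q) => t lt d.
  rewrite cat_path /ucycleb /= rcons_path lt esym exy => /andP [-> _] /andP [xq /[dup] ud].
  rewrite cat_uniq => /andP [-> _] /=; rewrite andbT.
  by apply: contra xq; rewrite mem_cat => ->.
have [x [q [_ _ _ uq sq]]] := P #|T|.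
have := max_card (mem (x :: q)).
by rewrite (card_uniqP uq) /= sq ltnn.
Qed.


Definition lin_ok (S : {set T}) (s : seq T) :=
  [/\ uniq s, forall x, (x \in s) = (x \in S) &
      forall x y, x \in S -> y \in S -> e x y ->
        index x s = (index y s).+1 \/ index y s = (index x s).+1].

Lemma lin_ok_rev S s : lin_ok S s -> lin_ok S (rev s).
Proof.
case=> us ms es; split; first by rewrite rev_uniq.
  by move=> x; rewrite mem_rev.
move=> x y xS yS exy.
have xs : x \in s by rewrite ms.
have ys : y \in s by rewrite ms.
have := index_mem x s; rewrite xs => ltx.
have := index_mem y s; rewrite ys => lty.
rewrite !index_rev //.
case: (es x y xS yS exy) => h; lia.
Qed.

Lemma lin_ok_insert (S S' : {set T}) s1 b s2 a :
  lin_ok S' (s1 ++ b :: s2) -> a \notin S' ->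
  (forall x, (x \in S) = (x == a) || (x \in S')) ->
  (forall y, y \in S -> e a y -> y = b) -> e a b ->
  (forall x, x \in s1 -> ~~ e x b) ->
  lin_ok S (s1 ++ a :: b :: s2).
Proof.
set s := s1 ++ b :: s2.
case=> us ms es aS' mS auniq eab hs1.
have bS' : b \in S' by rewrite -ms mem_cat inE eqxx orbT.
have ba : b != a by apply: contraNneq aS' => <-.
have as_ : a \notin s by rewrite ms.
have bs1 : b \notin s1.
  by move: us; rewrite cat_uniq => /and3P [_ /hasPn /(_ b (mem_head _ _)) ].
have idx : forall x, x \in S' ->
   (x \in s1 /\ index x (s1 ++ a :: b :: s2) = index x s /\ index x s < size s1) \/
   (x \notin s1 /\ index x (s1 ++ a :: b :: s2) = (index x s).+1 /\ size s1 <= index x s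
     /\ (x != b -> size s1 < index x s)).
  move=> x xS'.
  have xa : a != x by apply: contraNneq aS' => ->.
  rewrite /s !index_cat.
  case: (boolP (x \in s1)) => xs1.
    by left; rewrite index_mem.
  right; rewrite /= (negbTE xa); split => //.
  rewrite eq_sym; case: (boolP (x == b)) => [/eqP xb|nxb] /=.
    subst x.
    by split; [lia | split; [lia | by []]].
  by split; [lia | split; [lia | move=> _; lia]].
split.
- have P : perm_eq (s1 ++ a :: b :: s2) (a :: s).
    by apply/permPl; exact: (perm_catCA s1 [:: a] (b :: s2)).
  by rewrite (perm_uniq P) /= as_ us.
- move=> x; rewrite mS -ms /s !mem_cat !inE.
  by case: (x == a); rewrite ?orbT ?orbF.
have ia : index a (s1 ++ a :: b :: s2) = size s1.
  have as1 : a \notin s1 by apply: contra as_; rewrite /s mem_cat => ->.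
  by rewrite index_cat (negbTE as1) /= eqxx addn0.
have ib : index b (s1 ++ a :: b :: s2) = (size s1).+1.
  rewrite index_cat (negbTE bs1) /= eq_sym (negbTE ba) eqxx; lia.
move=> x y xS yS exy.
case: (eqVneq x a) => [xa | xa].
  subst x; by rewrite (auniq y yS exy) ia ib; right.
case: (eqVneq y a) => [ya | ya].
  subst y; rewrite esym in exy.
  by rewrite (auniq x xS exy) ia ib; left.
have xS' : x \in S' by move: xS; rewrite mS (negbTE xa).
have yS' : y \in S' by move: yS; rewrite mS (negbTE ya).
have := es x y xS' yS' exy.
have hxb : x \in s1 -> y != b by move=> /hs1; apply: contraNneq => <-.
have hyb : y \in s1 -> x != b by move=> /hs1; apply: contraNneq => <-; rewrite esym.
have Hx := idx x xS'.
have Hy := idx y yS'.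
move: Hx Hy hxb hyb.
move: (index x s) (index y s) (index x (s1 ++ a :: b :: s2)) (index y (s1 ++ a :: b :: s2)) (size s1) => ix iy jx jy n.
clear -ix.
move=> [[xs1 [-> ltx]] | [xs1 [-> [lex ltx]]]] [[ys1 [-> lty]] | [ys1 [-> [ley lty]]]] hxb hyb H.
- by case: H => h; [left|right]; lia.
- have := lty (hxb xs1); case: H => h; lia.
- have := ltx (hyb ys1); case: H => h; lia.
- by case: H => h; [left|right]; lia.
Qed.

Lemma lin_forest (S : {set T}) :
  (forall x, x \in S -> #|[set y in S | e x y]| <= 2) -> exists s, lin_ok S s.
Proof.
suff H : forall n (S : {set T}), #|S| <= n ->
    (forall x, x \in S -> #|[set y in S | e x y]| <= 2) -> exists s, lin_ok S s.
  by apply: (H #|S|).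
have empty : forall S : {set T}, S = set0 -> exists s, lin_ok S s.
  move=> S0 ->; exists [::]; split => // [x|x y]; by rewrite inE.
elim=> [|n IH] {}S.
  by rewrite leqn0 cards_eq0 => /eqP S0 _; apply: empty.
move=> Sn deg.
case: (eqVneq S set0) => [S0|SN]; first by apply: empty.
have [a aS adeg] := @leaf_exists S SN.
have S'n : #|S :\ a| <= n by move: Sn; rewrite (cardsD1 a S) aS.
have deg' : forall x, x \in S :\ a -> #|[set y in S :\ a | e x y]| <= 2.
  move=> x xS'; apply: leq_trans (deg x _); last by move: xS'; rewrite !inE => /andP [].
  apply: subset_leq_card; apply/subsetP => y; rewrite !inE.
  by case/andP => /andP [_ ->] ->.
have [s sok] := IH _ S'n deg'.
have aS' : a \notin S :\ a by rewrite !inE eqxx.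
have mS : forall x, (x \in S) = (x == a) || (x \in S :\ a).
  by move=> x; rewrite !inE; case: eqVneq => // ->.
case: (set_0Vmem [set y in S | e a y]) => [N0 | [b]].
- exists (a :: s); case: sok => us ms es; split.
  + by rewrite /= ms aS' us.
  + by move=> x; rewrite inE ms mS.
  + move=> x y xS yS exy.
    have noa : forall z, z \in S -> ~~ e a z.
      move=> z zS; apply/negP => eaz.
      have : z \in [set y in S | e a y] by rewrite inE zS eaz.
      by rewrite N0 inE.
    have xa : a != x by apply: contraNneq (noa y yS) => ->.
    have ya : a != y by apply: contraNneq (noa x xS) => ->; rewrite esym.
    rewrite /= (negbTE xa) (negbTE ya).
    have xS' : x \in S :\ a by rewrite !inE eq_sym xa xS.
    have yS' : y \in S :\ a by rewrite !inE eq_sym ya yS.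
    by case: (es x y xS' yS' exy) => ->; [left|right].
- rewrite inE => /andP [bS eab].
  have ba : b != a by apply: contraTneq eab => ->; rewrite eirr.
  have bS' : b \in S :\ a by rewrite !inE ba bS.
  have auniq : forall y, y \in S -> e a y -> y = b.
    by move=> y yS eay; apply: (card_le1_eq adeg); rewrite inE ?yS ?eay ?bS ?eab.
  have bdeg : #|[set y in S :\ a | e b y]| <= 1.
    have h2 := deg b bS.
    have : a |: [set y in S :\ a | e b y] \subset [set y in S | e b y].
      apply/subsetP => y; rewrite !inE.
      case/orP => [/eqP -> | /andP [/andP [_ ->] ->]] //.
      by rewrite aS esym eab.
    move/subset_leq_card; rewrite cardsU1 !inE eqxx /= => h1.
    lia.
  case: sok => us ms es.
  have bs : b \in s by rewrite ms.
  case: (splitPr bs) us ms es => s1 s2 us ms es.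
  have sok : lin_ok (S :\ a) (s1 ++ b :: s2) by split.
  case: (boolP (has (e b) s1)) => [/hasP [c cs1 ebc] | /hasPn hn].
  + exists (rev s2 ++ a :: b :: rev s1).
    apply: (@lin_ok_insert _ (S :\ a)) => //.
    * have := lin_ok_rev _ _ sok.
      by rewrite rev_cat /= rev_cons cat_rcons.
    * move=> x; rewrite mem_rev => xs2; apply/negP => exb.
      have xS' : x \in S :\ a by rewrite -ms mem_cat inE xs2 !orbT.
      have cS' : c \in S :\ a by rewrite -ms mem_cat cs1.
      have xc : x = c.
        by apply: (card_le1_eq bdeg); rewrite inE ?xS' ?cS' ?ebc // esym.
      move: us; rewrite cat_uniq => /and3P [_ /hasPn /(_ x)].
      by rewrite inE xs2 orbT xc cs1 => /(_ isT).
  + exists (s1 ++ a :: b :: s2).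
    apply: (@lin_ok_insert _ (S :\ a)) => //.
    by move=> x xs1; rewrite esym; exact: hn.
Qed.

End Forest.

Theorem theorem4p2 (T : finType) (e : rel T) :
  simple_graph e -> spider e -> odd_prime e.
Proof.
move=> [esym eirr] [[_ acyc] deg3].
case: (pickP (@predT T)) => [c0 _ | T0]; last first.
  have f : T -> 'I_#|T| by move=> x; move: (T0 x).
  exists f; split; last by move=> u; move: (T0 u).
  apply: inj_card_bij; first by move=> u; move: (T0 u).
  by rewrite card_ord.
have [c Hc] : exists c, forall x, x != c -> degree e x <= 2.
  case: (pickP (fun x => 3 <= degree e x)) => [c hc | H].
    exists c => x xc; rewrite leqNgt; apply: contra xc => hx.
    by apply/eqP; apply: (card_le1_eq deg3); rewrite inE.
  by exists c0 => x _; rewrite leqNgt; exact: negbT (H x).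
have degS : forall x, x \in [set~ c] -> #|[set y in [set~ c] | e x y]| <= 2.
  move=> x; rewrite !inE => xc; apply: (leq_trans _ (Hc x xc)).
  rewrite /degree; apply: subset_leq_card; apply/subsetP => y.
  by rewrite !inE => /andP [_ ->].
have [s [us ms es]] := @lin_forest T e esym eirr acyc _ degS.
have mf : forall x, x \in c :: s by move=> x; rewrite inE ms !inE orbN.
have uf : uniq (c :: s) by rewrite /= ms !inE eqxx us.
have sz : size (c :: s) = #|T|.
  by rewrite -(card_uniqP uf) cardT; apply: eq_cardT => x; rewrite mf.
have lt : forall x, index x (c :: s) < #|T| by move=> x; rewrite -sz index_mem.
exists (fun x => Ordinal (lt x)); split.
  apply: inj_card_bij; last by rewrite card_ord.
  move=> x y /(congr1 val) h.
  by rewrite -(nth_index c (mf x)) -(nth_index c (mf y)); congr nth; exact: h.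
move=> u v euv /=.
case: (boolP (c == u)) => [cu|cu] /=.
  by rewrite muln0 add0n coprime1n.
case: (boolP (c == v)) => [cv|cv] /=.
  by rewrite muln0 add0n coprimen1.
have uS : u \in [set~ c] by rewrite !inE eq_sym.
have vS : v \in [set~ c] by rewrite !inE eq_sym.
case: (es u v uS vS euv) => ->.
  by rewrite coprime_sym; apply: coprime_odd_succ.
by apply: coprime_odd_succ.
Qed.
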